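(* Let $Q$ be a finite closed down set of pairs with parameters $p,q,k$, $I_0,\dots,I_{k-1}$, $II_1,\dots,II_k$ as described in the context. Then $$|Q|\ge\sum_{j=1}^k II_j\Big(p+I_0+\sum_{\ell=1}^{j-1}(II_\ell+I_\ell)\Big).$$
   Context: Let $c_1,c_2,\dots$ and $s_1,s_2,\dots$ be distinct vertices, and let $Q$ be a finite set of pairs $c_as_b$ that is closed down: $c_as_b\in Q$ implies $c_{a'}s_{b'}\in Q$ for all $a'\le a$, $b'\le b$. Write $[i]\times[j]=\{c_as_b:a\le i,b\le j\}$, and let $\nu(\ell,Q)$ be the matching number of the bipartite graph with sides $\{c_1,\dots,c_\ell\},\{s_1,\dots,s_\ell\}$ and edge set $([\ell]\times[\ell])\setminus Q$. Let $p\ge0$ be the largest integer with $[p]\times[p]\subseteq Q$, and $q\ge0$ the least integer such that $\nu(\ell,Q)=\ell$ for all $\ell\ge p+q$. For every $\ell>p$ one has $\nu(\ell,Q)-\nu(\ell-1,Q)\in\{1,2\}$. The integer interval $(p,p+q]$ is divided, in increasing order, into consecutive left-open right-closed integer intervals $\mathcal O_0,\mathcal T_1,\mathcal O_1,\dots,\mathcal O_{k-1},\mathcal T_k$ such that the increment $\nu(\ell,Q)-\nu(\ell-1,Q)$ is $1$ for $\ell$ in each $\mathcal O_j$ and $2$ for $\ell$ in each $\mathcal T_j$; all intervals except possibly $\mathcal O_0$ are nonempty and the last one is $\mathcal T_k$. Set $I_j=|\mathcal O_j|$ and $II_j=|\mathcal T_j|$. *)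

(* Defs.v *)
From mathcomp Require Import all_boot.
From mathcomp Require Import finmap.
Set Implicit Arguments. Unset Strict Implicit. Unset Printing Implicit Defensive.
Local Open Scope fset_scope.

(* The pair c_a s_b is encoded as (a, b) : nat * nat, with a, b >= 1. *)

Definition closed_down (Q : {fset (nat * nat)}) : Prop :=
  forall a b a' b', (a, b) \in Q -> 0 < a' <= a -> 0 < b' <= b -> (a', b') \in Q.

Definition pos_indices (Q : {fset (nat * nat)}) : Prop :=
  forall a b, (a, b) \in Q -> (0 < a) && (0 < b).

Definition box_in (Q : {fset (nat * nat)}) (i j : nat) : Prop :=
  forall a b, 0 < a <= i -> 0 < b <= j -> (a, b) \in Q.

(* Bipartite graph on {c_1..c_l} and {s_1..s_l} with edges ([l]x[l]) \ Q;
   the vertex c_a (resp. s_b) is encoded by the ordinal a-1 : 'I_l. *)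
Definition is_edge (Q : {fset (nat * nat)}) (l : nat) (e : 'I_l * 'I_l) : bool :=
  (e.1.+1, e.2.+1) \notin Q.

Definition is_matching (Q : {fset (nat * nat)}) (l : nat)
    (M : {set 'I_l * 'I_l}) : bool :=
  [forall e in M, is_edge Q e] &&
  [forall e in M, forall f in M, ((e.1 == f.1) || (e.2 == f.2)) ==> (e == f)].

Definition nu (Q : {fset (nat * nat)}) (l : nat) : nat :=
  \max_(M : {set 'I_l * 'I_l} | is_matching Q M) #|M|.

(* Main.v *)
Require Import Defs.
From mathcomp Require Import all_boot.
From mathcomp Require Import finmap.
From mathcomp Require Import zify.
From Stdlib Require Import Classical.
Set Implicit Arguments. Unset Strict Implicit.

Lemma tele (f : nat -> nat) c a n :
  (forall l, a < l <= a + n -> f l = f l.-1 + c) -> f (a + n) = f a + c * n.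
Proof.
elim: n => [|n IH] H; first by rewrite addn0 muln0 addn0.
rewrite addnS H; last by apply/andP; split; lia.
rewrite /= IH ?mulnS; first lia.
move=> l /andP [h1 h2]; apply: H; apply/andP; split; lia.
Qed.

Lemma card_ge_ord l y : #|[set i : 'I_l | y <= i]| = l - y.
Proof.
rewrite -sum1_card.
have -> : \sum_(i in [set i : 'I_l | y <= i]) 1 = \sum_(i < l | y <= i) 1.
  by apply: eq_bigl => i; rewrite inE.
have -> : \sum_(i < l | y <= i) 1 = \sum_(y <= i < l) 1 by rewrite big_geq_mkord.
case: (leqP y l) => h.
  by rewrite sum_nat_const_nat muln1.
by rewrite big_geq ?(ltnW h) //; move/ltnW: h; rewrite -subn_eq0 => /eqP ->.
Qed.

Lemma N1 (Q : {fset (nat * nat)}) l x y : closed_down Q -> (x, y) \in Q -> 0 < x <= l -> 0 < y <= l ->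
  nu Q l + x + y <= 2 * l.
Proof.
move=> cd xyQ /andP [x0 xl] /andP [y0 yl].
have H : nu Q l <= (l - y) + (l - x).
  apply/bigmax_leqP => M /andP [/forallP Medge /forallP Mm].
  rewrite -(cardsID [set e : 'I_l * 'I_l | e.1 < x] M).
  apply: leq_add.
  - rewrite -(card_ge_ord l y) -(card_in_imset (f := fun e : 'I_l * 'I_l => e.2)).
      apply: subset_leq_card; apply/subsetP => b /imsetP [e].
      rewrite !inE => /andP [eM ex] ->.
      rewrite leqNgt; apply/negP => eb.
      move: (Medge e); rewrite eM /= /is_edge => /negP; apply.
      by apply: (cd x y) => //; rewrite ltn0Sn.
    move=> e f; rewrite !inE => /andP [eM _] /andP [fM _] ef.
    move: (Mm e); rewrite eM /= => /forallP /(_ f); rewrite fM /= ef eqxx orbT /=.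
    by move/eqP.
  - rewrite -(card_ge_ord l x) -(card_in_imset (f := fun e : 'I_l * 'I_l => e.1)).
      apply: subset_leq_card; apply/subsetP => b /imsetP [e].
      rewrite !inE => /andP [ex eM] ->.
      by rewrite leqNgt.
    move=> e f; rewrite !inE => /andP [_ eM] /andP [_ fM] ef.
    move: (Mm e); rewrite eM /= => /forallP /(_ f); rewrite fM /= ef eqxx /=.
    by move/eqP.
move: H; rewrite -!addnA => H.
have : nu Q l + (x + y) <= (l - y) + (l - x) + (x + y) by rewrite leq_add2r.
move/leq_trans; apply.
lia.
Qed.

Lemma N2 (Q : {fset (nat * nat)}) l m : (forall x y, (x, y) \in Q -> 0 < x <= l -> 0 < y <= l -> x + y <= l + m) ->
  l - m <= nu Q l.
Proof.
move=> H.
pose M := [set e : 'I_l * 'I_l | (m <= e.1) && (e.1 + e.2 + 1 == l + m)].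
have Mm : is_matching Q M.
  apply/andP; split.
    apply/forallP => e; apply/implyP; rewrite inE => /andP [_ /eqP he].
    rewrite /is_edge /=; apply/negP => /H.
    have := ltn_ord e.1; have := ltn_ord e.2.
    move=> h1 h2 /(_ h2 h1); lia.
  apply/forallP => e; apply/implyP; rewrite inE => /andP [_ /eqP he].
  apply/forallP => f; apply/implyP; rewrite inE => /andP [_ /eqP hf].
  apply/implyP => /orP [/eqP h | /eqP h]; apply/eqP;
    case: e he h => [e1 e2]; case: f hf => [f1 f2] /= hf he h.
    have h2 : e2 = f2 by apply: val_inj => /=; move: h => /(congr1 val) /= h; lia.
    by rewrite h h2.
  have h2 : e1 = f1 by apply: val_inj => /=; move: h => /(congr1 val) /= h; lia.
  by rewrite h h2.
have HH := @leq_bigmax_cond _ (@is_matching Q l) (fun M : {set 'I_l * 'I_l} => #|M|) _ Mm.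
rewrite /nu. apply: leq_trans HH.
rewrite -card_ge_ord.
apply: (leq_trans _ (leq_imset_card (fun e : 'I_l * 'I_l => e.1) M)).
apply: subset_leq_card; apply/subsetP => i; rewrite inE => mi.
have jl : l + m - 1 - i < l by have := ltn_ord i; lia.
apply/imsetP; exists (i, Ordinal jl) => //.
rewrite inE /= mi /=; apply/eqP; have := ltn_ord i; lia.
Qed.

Lemma uniq_blocks (F : nat -> seq (nat * nat)) (lo hi : nat -> nat) n a :
  (forall j, uniq (F j)) -> (forall j c, a <= j < a + n -> c \in F j -> lo j < c.2 <= hi j) ->
  (forall j, hi j.+1 <= lo j) -> (forall j, lo j <= hi j) ->
  uniq (flatten [seq F j | j <- iota a n]).
Proof.
move=> Fu Fr h1 h2.
have hmono : forall d j, hi (j + d) <= hi j.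
  elim=> [|d IH] j; first by rewrite addn0.
  by rewrite addnS; apply: leq_trans (h1 _) _; apply: leq_trans (h2 _) (IH j).
elim: n a Fr => [|n IH] a Fr //=.
rewrite cat_uniq Fu IH ?andbT /=; last first.
  by move=> j c hj; apply: Fr; lia.
apply/hasPn => c /flattenP [s /mapP [j jin ->] cj].
apply/negP => cF.
move: jin; rewrite mem_iota => /andP [aj ajn].
have := Fr j _ ltac:(lia) cj; have := Fr a _ ltac:(lia) cF => /andP [hc1 _] /andP [_ hc2].
have := hmono (j - a.+1) a.+1; rewrite subnKC // => hh.
have := h1 a; lia.
Qed.

Unset Implicit Arguments. Set Strict Implicit.

Theorem lemma7 (Q : {fset (nat * nat)}) (p q k : nat) (I II : nat -> nat) :
  closed_down Q ->
  pos_indices Q ->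
  box_in Q p p ->
  (forall p', box_in Q p' p' -> p' <= p) ->
  (forall l, p + q <= l -> nu Q l = l) ->
  (forall q', (forall l, p + q' <= l -> nu Q l = l) -> q <= q') ->
  p + I 0 + \sum_(1 <= j < k.+1) II j + \sum_(1 <= j < k) I j = p + q ->
  (forall l, p < l <= p + I 0 -> nu Q l = (nu Q l.-1).+1) ->
  (forall j, 1 <= j <= k ->
     0 < II j /\
     forall l, p + I 0 + \sum_(1 <= m < j) (II m + I m) < l <=
               p + I 0 + \sum_(1 <= m < j) (II m + I m) + II j ->
       nu Q l = (nu Q l.-1).+2) ->
  (forall j, 1 <= j < k ->
     0 < I j /\
     forall l, p + I 0 + \sum_(1 <= m < j) (II m + I m) + II j < l <=
               p + I 0 + \sum_(1 <= m < j) (II m + I m) + II j + I j ->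
       nu Q l = (nu Q l.-1).+1) ->
  \sum_(1 <= j < k.+1) II j * (p + I 0 + \sum_(1 <= m < j) (II m + I m))
    <= #|` Q|%fset.
Proof.
move=> cd _ box _ Hq _ Hsum H0 HT HO.
case: (posnP k) => [->|k0]; first by rewrite big_geq.
pose L j := p + I 0 + \sum_(1 <= m < j) (II m + I m).
pose t j := \sum_(j <= m < k.+1) II m.
have LS : forall j, 0 < j -> L j.+1 = L j + II j + I j.
  by move=> j j0; rewrite /L big_nat_recr //= !addnA.
have L1 : L 1 = p + I 0 by rewrite /L big_geq // addn0.
have tS : forall j, 0 < j <= k -> t j = II j + t j.+1.
  by move=> j /andP [_ jk]; rewrite /t big_ltn.
have tk1 : t k.+1 = 0 by rewrite /t big_geq.
have tS' : forall j, t j.+1 <= t j.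
  move=> j; case: (ltnP j k.+1) => h.
    have -> : t j = II j + t j.+1 by rewrite /t [in LHS]big_ltn.
    exact: leq_addl.
  by rewrite /t big_geq // ltnW.
have tle : forall j d, t (j + d) <= t j.
  move=> j; elim=> [|d IH]; first by rewrite addn0.
  by rewrite addnS; apply: leq_trans (tS' _) IH.
have Lk : p + q = L k + II k.
  rewrite -Hsum /L big_split /= big_nat_recr //=; lia.
pose nv := nu Q.
have Tj : forall j, 0 < j <= k -> nv (L j + II j) = nv (L j) + 2 * II j.
  move=> j jk; apply: tele => l hl; rewrite /nv (proj2 (HT j jk) l hl); lia.
have Oj : forall j, 0 < j < k -> nv (L j + II j + I j) = nv (L j + II j) + 1 * I j.
  move=> j jk; apply: tele => l hl; rewrite /nv (proj2 (HO j jk) l hl); lia.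
have chain : forall j, 0 < j <= k -> nv (L j) + t j = L j.
  have : forall d j, k - j = d -> 0 < j <= k -> nv (L j) + t j = L j.
    elim=> [|d IH] j hd hj.
      have jk : j = k by lia.
      subst j; move: (Tj k hj); rewrite -Lk /nv Hq // (tS k hj) tk1; lia.
    have jk : 0 < j < k by lia.
    have := IH j.+1 ltac:(lia) ltac:(lia).
    rewrite LS ?(Oj j jk) ?(Tj j) ?(tS j); try lia.
  by move=> H j; apply: H.
have t1p : t 1 <= p.
  have := chain 1 ltac:(lia); rewrite L1.
  have := tele (f := nv) (c := 1) (a := p) (n := I 0).
  move=> ->; last by move=> l hl; rewrite /nv (H0 l hl); lia.
  lia.
have tpos : forall j, 0 < j <= k -> 0 < t j.
  move=> j jk; rewrite (tS j jk); have := proj1 (HT j jk); lia.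
have tlep : forall j, 0 < j -> t j <= p.
  move=> j j0; apply: leq_trans t1p; have := tle 1 (j - 1); rewrite subnKC //.
have Ostep : forall j, 0 < j <= k -> L j = p \/ (0 < L j /\ nv (L j) = (nv (L j).-1).+1).
  move=> j jk; case: j jk => [|j] jk; first by lia.
  case: j jk => [|j] jk.
    case: (posnP (I 0)) => hI; first by left; rewrite L1 hI addn0.
    right; rewrite L1; split; first lia.
    by rewrite /nv H0 //; lia.
  have hj : 0 < j.+1 < k by lia.
  have := proj1 (HO _ hj) => hI.
  right; rewrite LS //; split; first lia.
  by rewrite /nv (proj2 (HO _ hj)) //; rewrite -/(L j.+1); lia.
have cell : forall j, 0 < j <= k -> forall u v, 0 < u <= L j -> 0 < v <= t j ->
    ((u, v) \in Q) || ((v, u) \in Q).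
  move=> j jk u v hu hv.
  have tp := tlep j ltac:(lia).
  case: (Ostep j jk) => [Lp | [Lpos Ostp]].
    by rewrite box //; lia.
  set l := L j in Lpos Ostp hu.
  have ch := chain j jk; rewrite -/l in ch.
  have tj := tpos j jk.
  case: (classic (exists x y, (x, y) \in Q /\ 0 < x <= l /\ 0 < y <= l /\ l + t j <= x + y)).
    move=> [x [y [xyQ [hx [hy hs]]]]].
    have : ~~ ((x <= l.-1) && (y <= l.-1)).
      apply/negP => /andP [x1 y1].
      have := N1 (l:=l.-1) cd xyQ ltac:(lia) ltac:(lia); rewrite /nv in Ostp ch; lia.
    rewrite negb_and -!ltnNge => /orP [xl | yl].
      by rewrite (cd x y) //; lia.
    by rewrite (cd x y v u) ?orbT //; lia.
  move=> nc; exfalso.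
  have := N2 (Q := Q) (l := l) (m := (t j).-1).
  have hyp : forall x y, (x, y) \in Q -> 0 < x <= l -> 0 < y <= l -> x + y <= l + (t j).-1.
    move=> x y xyQ hx hy; rewrite leqNgt; apply/negP => hh; apply: nc.
    exists x, y; split => //; split => //; split => //; lia.
  move=> /(_ hyp); rewrite -/(nv l); lia.
change (\sum_(1 <= j < k.+1) II j * L j <= #|` Q|%fset).
pose B j := [seq (u, v) | u <- iota 1 (L j), v <- iota (t j.+1).+1 (II j)].
pose s := flatten [seq B j | j <- iota 1 k].
have mems : forall c, c \in s -> exists j, [/\ 0 < j <= k, 0 < c.1 <= L j & t j.+1 < c.2 <= t j].
  move=> c /flattenP [b /mapP [j jin ->] cb]; move: cb => /allpairsP [[u v] [/= hu hv ->]].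
  rewrite !mem_iota in jin hu hv.
  have jk : 0 < j <= k by lia.
  exists j; split => //=; rewrite (tS j jk); lia.
have ssize : size s = \sum_(1 <= j < k.+1) II j * L j.
  rewrite size_flatten /shape -map_comp sumnE big_map /index_iota subn1 /=.
  by apply: eq_bigr => j _; rewrite /= size_allpairs !size_iota mulnC.
have suniq : uniq s.
  apply: (uniq_blocks (lo := fun j => t j.+1) (hi := t)) => //.
  - move=> j; apply: allpairs_uniq; rewrite ?iota_uniq //.
    by move=> [a b] [c d] _ _.
  - move=> j c hj /allpairsP [[u v] [/= hu hv ->]] /=.
    rewrite !mem_iota in hu hv.
    have jk : 0 < j <= k by lia.
    rewrite (tS j jk); lia.
pose f (c : nat * nat) := if c \in Q then c else (c.2, c.1).
rewrite -ssize -(size_map f).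
apply: uniq_leq_size.
  rewrite map_inj_in_uniq //.
  move=> c c' cs c's.
  have [j1 [j1k hc1 hc2]] := mems c cs.
  have [j2 [j2k hc1' hc2']] := mems c' c's.
  have t1 := tlep j1 ltac:(lia).
  have t2 := tlep j2 ltac:(lia).
  rewrite /f; case: c cs hc1 hc2 => [a b] cs hc1 hc2; case: c' c's hc1' hc2' => [a' b'] c's hc1' hc2' /=.
  case: ifP => hQ; case: ifP => hQ' //.
  - move=> [e1 e2]; subst a b; exfalso; move/negbT: hQ' => /negP; apply.
    by apply: box; move: hc1 hc2 hc1' hc2' => /=; lia.
  - move=> [e1 e2]; subst a' b'; exfalso; move/negbT: hQ => /negP; apply.
    by apply: box; move: hc1 hc2 hc1' hc2' => /=; lia.
  - by move=> [-> ->].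
move=> c /mapP [c0 c0s ->].
have [j [jk hc1 hc2]] := mems c0 c0s.
have := cell j jk c0.1 c0.2 ltac:(lia) ltac:(lia).
rewrite /f; case: c0 {c0s hc1 hc2} => [a b] /=.
by case: ifP => //= _.
Qed.
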